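(* Let $m\geq 1$, $n\geq 3$ and $p\geq 2$ be integers. For all vertices $i,j$ of the oriented Dutch windmill graph $D^m_n$, the number of walks in $D^m_n$ of length $pn-1$ from $i$ to $j$ is $m^{p-1}$ times the number of walks of length $n-1$ from $i$ to $j$.
   Context: For integers $m\geq 1$, $n\geq 3$, the oriented Dutch windmill graph $D^m_n$ is the directed graph with vertex set $V=\{1,2,\ldots,m(n-1)+1\}$ whose directed edges $(a,b)$ are exactly: $(1,(k-1)(n-1)+2)$ for $k\in\{1,\ldots,m\}$; $((k-1)(n-1)+i,(k-1)(n-1)+i+1)$ for $k\in\{1,\ldots,m\}$ and $i\in\{2,\ldots,n-1\}$; and $((k-1)(n-1)+n,1)$ for $k\in\{1,\ldots,m\}$. A walk is a sequence of vertices $\langle v_1,\ldots,v_r\rangle$ in which each $(v_t,v_{t+1})$ is an edge; its length is $r-1$; walks are distinct when they are distinct sequences. *)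

(* Defs.v *)
From mathcomp Require Import all_boot.
Set Implicit Arguments. Unset Strict Implicit. Unset Printing Implicit Defensive.

Definition dw_nv (m n : nat) : nat := m * (n - 1) + 1.

Definition dw_vertex (m n v : nat) : bool := (1 <= v) && (v <= dw_nv m n).

Definition dw_edge (m n a b : nat) : bool :=
  has (fun k =>
         [|| (a == 1) && (b == (k - 1) * (n - 1) + 2),
             has (fun i => (a == (k - 1) * (n - 1) + i) &&
                           (b == (k - 1) * (n - 1) + i + 1)) (iota 2 (n - 2))
           | (a == (k - 1) * (n - 1) + n) && (b == 1)])
      (iota 1 m).

Definition dw_is_walk (m n : nat) (s : seq nat) : bool :=
  match s with
  | [::] => false
  | x :: s' => dw_vertex m n x && path (dw_edge m n) x s'
  end.

(* Number of walks of length L from i to j: walks are the distinct vertex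
   sequences <v_1,...,v_(L+1)>; every vertex is <= dw_nv m n, so they are in
   bijection with the (L+1)-tuples over 'I_(dw_nv m n).+1 selected below. *)
Definition dw_nwalks (m n L i j : nat) : nat :=
  #|[set t : (L.+1).-tuple 'I_(dw_nv m n).+1 |
       let s := map val (val t) in
       [&& dw_is_walk m n s, head 0 s == i & last 0 s == j]]|.

(* Main.v *)
Require Import Defs.
From mathcomp Require Import all_boot zify.
Set Implicit Arguments. Unset Strict Implicit.
Arguments dw_is_walk : simpl never.

Definition dpos n v := if v == 1 then 0 else (v - 2) %% (n - 1) + 1.
Definition dblade n v := if v == 1 then 0 else (v - 2) %/ (n - 1) + 1.
Definition code n k i := (k - 1) * (n - 1) + i + 1.

Lemma code_pos n k i : 3 <= n -> 1 <= k -> 1 <= i <= n - 1 ->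
  dpos n (code n k i) = i /\ dblade n (code n k i) = k.
Proof.
move=> hn hk /andP[hi1 hi2].
have ne1 : (code n k i == 1) = false by apply/negbTE; rewrite /code; nia.
have e : code n k i - 2 = (k - 1) * (n - 1) + (i - 1) by rewrite /code; nia.
rewrite /dpos /dblade ne1 e modnMDl divnMDl; last nia.
rewrite modn_small ?divn_small; nia.
Qed.

Lemma code_inj n k i k' i' : 3 <= n -> 1 <= k -> 1 <= i <= n - 1 ->
  1 <= k' -> 1 <= i' <= n - 1 -> code n k i = code n k' i' -> k = k' /\ i = i'.
Proof.
move=> hn hk hi hk' hi' e.
have [a b] := code_pos hn hk hi; have [a' b'] := code_pos hn hk' hi'.
by split; [rewrite -b -b' e | rewrite -a -a' e].
Qed.

Lemma code_vertex m n k i : 3 <= n -> 1 <= k <= m -> 1 <= i <= n - 1 ->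
  dw_vertex m n (code n k i).
Proof. move=> hn /andP[hk1 hk2] /andP[hi1 hi2]; rewrite /dw_vertex /dw_nv /code; apply/andP; split; nia. Qed.

Lemma vertex_cases m n v : 3 <= n -> dw_vertex m n v ->
  v = 1 \/ exists k i, [/\ 1 <= k <= m, 1 <= i <= n - 1 & v = code n k i].
Proof.
move=> hn /andP[hv1 hv2]; rewrite /dw_nv in hv2.
case: (ltngtP v 1) => [|hv|->]; [nia| right | by left].
exists ((v - 2) %/ (n - 1)).+1, ((v - 2) %% (n - 1)).+1.
have d0 : 0 < n - 1 by nia.
have h1 : (v - 2) %/ (n - 1) < m by rewrite ltn_divLR //; nia.
have h2 : (v - 2) %% (n - 1) < n - 1 by rewrite ltn_pmod.
have h3 := divn_eq (v - 2) (n - 1).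
split; try nia.
rewrite /code. rewrite subSS subn0. nia.
Qed.

Lemma edge_valid m n a b : 3 <= n -> dw_edge m n a b ->
  dw_vertex m n a && dw_vertex m n b.
Proof.
move=> hn /hasP[k]; rewrite mem_iota => /andP[hk1 hk2].
rewrite /dw_vertex /dw_nv.
case/or3P.
- case/andP=> /eqP-> /eqP->; apply/andP; split; apply/andP; split; nia.
- case/hasP=> i; rewrite mem_iota => /andP[hi1 hi2] /andP[/eqP-> /eqP->].
  apply/andP; split; apply/andP; split; nia.
- case/andP=> /eqP-> /eqP->; apply/andP; split; apply/andP; split; nia.
Qed.

Lemma edge_center m n b : 3 <= n ->
  dw_edge m n 1 b = (b \in [seq code n k 1 | k <- iota 1 m]).
Proof.
move=> hn; rewrite -has_pred1 has_map /dw_edge; apply: eq_in_has => k.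
rewrite mem_iota => /andP[hk1 hk2] /=.
have -> : (k - 1) * (n - 1) + 2 = code n k 1 by rewrite /code; nia.
rewrite /=.
rewrite [X in _ = X]eq_sym; case: (b == code n k 1) => //=.
have -> : (1 == (k - 1) * (n - 1) + n) = false by apply/negbTE; nia.
rewrite orbF; apply/negbTE/hasPn => i; rewrite mem_iota => /andP[hi1 _].
apply/negP => /andP[/eqP h _]; nia.
Qed.

Lemma edge_code m n k i b : 3 <= n -> 1 <= k <= m -> 1 <= i <= n - 1 ->
  dw_edge m n (code n k i) b = (if i == n - 1 then b == 1 else b == code n k i.+1).
Proof.
move=> hn /andP[hk1 hk2] hi.
apply/hasP/idP.
- case=> k'; rewrite mem_iota => /andP[hk1' hk2'].
  case/or3P.
  + case/andP=> /eqP h _; move: h; rewrite /code; nia.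
  + case/hasP=> i'; rewrite mem_iota => /andP[hi1 hi2] /andP[/eqP h /eqP->].
    have e : (k' - 1) * (n - 1) + i' = code n k' i'.-1 by rewrite /code; nia.
    rewrite e in h.
    have hi'' : 1 <= i'.-1 <= n - 1 by nia.
    have [ek ei] := code_inj hn hk1 hi hk1' hi'' h; subst k' i.
    have -> : (i'.-1 == n - 1) = false by apply/negbTE; nia.
    rewrite e /code; apply/eqP; nia.
  + case/andP=> /eqP h /eqP->.
    have e : (k' - 1) * (n - 1) + n = code n k' (n - 1) by rewrite /code; nia.
    rewrite e in h.
    have hi'' : 1 <= n - 1 <= n - 1 by nia.
    have [_ ->] := code_inj hn hk1 hi hk1' hi'' h.
    by rewrite eqxx.
- move=> h; exists k; first by rewrite mem_iota; nia.
  apply/or3P; case: eqP h => [ei /eqP eb | ni /eqP eb].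
  + apply: Or33; rewrite eb eqxx andbT /code; apply/eqP; nia.
  + apply: Or32; apply/hasP; exists i.+1; first by rewrite mem_iota; nia.
    rewrite eb /code; apply/andP; split; apply/eqP; nia.
Qed.

Lemma card_set_sum (T : finType) (P : pred T) : #|[set x | P x]| = \sum_x P x.
Proof.
rewrite -sum1_card big_mkcond /=; apply: eq_bigr => x _; rewrite inE; by case: (P x).
Qed.

Lemma sum_pred1 N (G : nat -> nat) a :
  \sum_(v < N) (nat_of_ord v == a) * G v = (a < N) * G a.
Proof.
case: (ltnP a N) => h.
- rewrite (bigD1 (Ordinal h)) //= eqxx mul1n big1 ?addn0 // => v.
  by rewrite -val_eqE /= => /negbTE ->.
- rewrite big1 // => v _; have := ltn_ord v.
  case: eqP => [->|] //; by rewrite ltnNge h.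
Qed.

Lemma sum_pred1c N c a :
  \sum_(v < N) (nat_of_ord v == a) * c = (a < N) * c.
Proof. exact: (sum_pred1 N (fun _ => c) a). Qed.

Lemma walk_cons m n x y s : 3 <= n ->
  dw_is_walk m n [:: x, y & s] = dw_edge m n x y && dw_is_walk m n (y :: s).
Proof.
move=> hn; rewrite /dw_is_walk /=; case E: (dw_edge m n x y) => /=.
- by have /andP[-> ->] := edge_valid hn E.
- by rewrite andbF.
Qed.

Lemma nwalks_rec m n L i j : 3 <= n ->
  dw_nwalks m n L.+1 i j =
  \sum_(v < (dw_nv m n).+1) dw_edge m n i v * dw_nwalks m n L v j.
Proof.
move=> hn; set N := (dw_nv m n).+1.
rewrite /dw_nwalks card_set_sum.
rewrite (reindex (fun p : 'I_N * (L.+1).-tuple 'I_N => [tuple of p.1 :: p.2])) /=; last first.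
  exists (fun t => (thead t, [tuple of behead t])) => [[x t] _ | t _] /=.
  - by rewrite theadE; congr pair; apply: val_inj.
  - by rewrite -tuple_eta.
transitivity (\sum_(x : 'I_N) \sum_(t : (L.+1).-tuple 'I_N)
     [&& dw_is_walk m n (val x :: map val t), val x == i
       & last (val x) (map val t) == j]).
  by rewrite pair_bigA; apply: eq_bigr => -[x t] _.
have E : forall x : 'I_N,
  \sum_(t : (L.+1).-tuple 'I_N)
     [&& dw_is_walk m n (val x :: map val t), val x == i
       & last (val x) (map val t) == j]
  = (val x == i) * \sum_(v < N) dw_edge m n i v *
      \sum_(t : (L.+1).-tuple 'I_N)
        [&& dw_is_walk m n (map val t), head 0 (map val t) == v
          & last 0 (map val t) == j].
  move=> x; case: eqP => [exi|nxi]; last first.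
    by rewrite /= mul0n big1 // => t _; rewrite /= andbF.
  rewrite /= mul1n.
  under [RHS]eq_bigr do rewrite big_distrr.
  rewrite exchange_big /=; apply: eq_bigr => t _.
  have ht : map val t = val (thead t) :: map val (behead t).
    by rewrite {1}(tuple_eta t).
  have {}exi : nat_of_ord x = i by [].
  rewrite ht /= walk_cons // exi.
  transitivity (\sum_(v < N) (nat_of_ord v == nat_of_ord (thead t)) *
     (dw_edge m n i (thead t) && dw_is_walk m n (nat_of_ord (thead t) :: map val (behead t))
      && (last (nat_of_ord (thead t)) (map val (behead t)) == j))).
    by rewrite sum_pred1c ltn_ord mul1n andbA.
  apply: eq_bigr => v _; rewrite eq_sym; case: eqP => [->|_]; first by rewrite mul1n; case: (dw_edge m n i v) => /=; [rewrite mul1n | rewrite mul0n].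
  by rewrite /= mul0n andbF muln0.
rewrite (eq_bigr _ (fun x _ => E x)) /=.
rewrite (sum_pred1 N (fun _ => \sum_(v < N) dw_edge m n i v * _)).
case: (ltnP i N) => hi; first by rewrite mul1n; apply: eq_bigr => v _; rewrite card_set_sum.
rewrite mul0n big1 // => v _.
case E2: (dw_edge m n i v) => //.
have /andP[/andP[_ hv] _] := edge_valid hn E2.
by move: hi; rewrite /N; move: hv; clear; lia.
Qed.

Lemma nwalks0 m n i j : dw_nwalks m n 0 i j = dw_vertex m n i && (i == j).
Proof.
set N := (dw_nv m n).+1.
rewrite /dw_nwalks card_set_sum.
rewrite (reindex (fun x : 'I_N => [tuple x])) /=; last first.
  exists (fun t => thead t) => [x _ | t _] /=; first by rewrite theadE.
  by apply: val_inj; rewrite /= {2}(tuple_eta t) /=; case: t => -[|a [|b s]].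
transitivity (\sum_(x < N) (nat_of_ord x == i) * (dw_vertex m n i && (i == j))).
  apply: eq_bigr => x _; rewrite /dw_is_walk /= andbT.
  by case: eqP => [->|] /=; [rewrite mul1n | rewrite mul0n andbF].
rewrite sum_pred1c; case: (ltnP i N) => h; first by rewrite mul1n.
rewrite mul0n; case: (dw_vertex m n i) / andP => //= -[_ hv].
by move: h; rewrite /N; move: hv; clear; lia.
Qed.

Lemma sum_mem N (G : nat -> nat) s : uniq s -> all (fun x => x < N) s ->
  \sum_(v < N) (nat_of_ord v \in s) * G v = \sum_(x <- s) G x.
Proof.
move=> us as_.
transitivity (\sum_(v < N | nat_of_ord v \in s) G v).
  rewrite [RHS]big_mkcond; apply: eq_bigr => v _.
  by case: (_ \in s) => /=; [rewrite mul1n | rewrite mul0n].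
rewrite -(big_mkord (fun v => v \in s) G) -big_filter.
apply: perm_big; apply: uniq_perm => //; first by rewrite filter_uniq // iota_uniq.
move=> x; rewrite mem_filter mem_iota add0n.
case hx: (x \in s) => //=.
by rewrite subn0; move/allP: as_ => /(_ x hx).
Qed.

Lemma sum_count (s : seq nat) B c :
  \sum_(k <- s) (k == B) * c = count (pred1 B) s * c.
Proof. elim: s => [|x s IH]; first by rewrite big_nil. by rewrite big_cons IH /= mulnDl. Qed.

Lemma sum_const (s : seq nat) c : \sum_(k <- s) c = size s * c.
Proof. elim: s => [|x s IH]; first by rewrite big_nil. by rewrite big_cons IH /= mulSn. Qed.

Lemma divS_cases n P t : 0 < n -> P < n -> P <= t ->
  (t.+1 - P) %/ n = (t.+1 %% n == P) + (t - P) %/ n.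
Proof.
move=> n0 Pn Pt.
have -> : t.+1 - P = (t - P).+1 by lia.
rewrite divnS //; congr addn.
have -> : (t - P).+1 = t.+1 - P by lia.
rewrite -eqn_mod_dvd; last lia.
by rewrite (modn_small Pn).
Qed.

Definition Fw m n t i j :=
  (dw_vertex m n i) * ((dpos n i + t) %% n == dpos n j) *
  ((dpos n j <= t) || (dblade n i == dblade n j)) * m ^ ((t - dpos n j) %/ n).

Lemma dpos1 n : dpos n 1 = 0. Proof. by rewrite /dpos eqxx. Qed.
Lemma dblade1 n : dblade n 1 = 0. Proof. by rewrite /dblade eqxx. Qed.

Lemma code_ne1 n k i : 1 <= i -> (code n k i == 1) = false.
Proof. move=> h; apply/negbTE; rewrite /code; nia. Qed.

Lemma dpos_code n k i : 3 <= n -> 1 <= k -> 1 <= i <= n - 1 -> dpos n (code n k i) = i.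
Proof. by move=> *; case: (@code_pos n k i). Qed.
Lemma dblade_code n k i : 3 <= n -> 1 <= k -> 1 <= i <= n - 1 -> dblade n (code n k i) = k.
Proof. by move=> *; case: (@code_pos n k i). Qed.

Lemma Fw0 m n i j : 3 <= n -> dw_vertex m n j ->
  nat_of_bool (dw_vertex m n i && (i == j)) = Fw m n 0 i j.
Proof.
move=> hn hj; rewrite /Fw.
case: (boolP (dw_vertex m n i)) => hi /=; last by rewrite !mul0n.
rewrite mul1n addn0 sub0n div0n expn0 muln1 leqn0.
have [->|[k [a [/andP[hk _] ha ->]]]] := vertex_cases hn hi;
have [->|[k' [a' [/andP[hk' _] ha' ->]]]] := vertex_cases hn hj;
rewrite ?dpos1 ?dblade1; try rewrite [X in X = _]eq_sym;
rewrite ?code_ne1 ?(dpos_code hn _ ha) ?(dpos_code hn _ ha') ?(dblade_code hn _ ha) ?(dblade_code hn _ ha') //; try lia.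
- by rewrite mod0n.
- rewrite eq_sym code_ne1; last lia.
  rewrite mod0n; case: (0 =P a') => [?|_]; [lia | by rewrite mul0n].
- rewrite modn_small; last lia.
  case: (a =P 0) => [?|_]; [lia | by rewrite mul0n].
- rewrite modn_small; last lia.
  have -> : (a' == 0) = false by apply/negbTE; lia.
  rewrite /=.
  case: (a =P a') => ea; case: (k =P k') => ek; subst; rewrite ?eqxx //=;
  case: eqP => [e|_] //; have := code_inj hn hk ha hk' ha' e; lia.
Qed.

Lemma core1 m n t P B : 3 <= n -> P < n -> (P = 0 \/ 1 <= B <= m) ->
  \sum_(k <- iota 1 m) (1 * ((1 + t) %% n == P) * ((P <= t) || (k == B)) * m ^ ((t - P) %/ n))
 = 1 * ((0 + t.+1) %% n == P) * ((P <= t.+1) || (0 == B)) * m ^ ((t.+1 - P) %/ n).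
Proof.
move=> hn hP hPB; rewrite add1n add0n.
case: (t.+1 %% n =P P) => e /=; last by rewrite big1 => [|k _]; rewrite ?muln0 ?mul0n.
case: (leqP P t) => hPt.
- have -> : P <= t.+1 by lia.
  rewrite /= sum_const size_iota divS_cases //; last lia.
  by rewrite e eqxx add1n expnS !mul1n.
- have ePt : P = t.+1 by have := leq_mod t.+1 n; lia.
  have -> : t - P = 0 by lia.
  have -> : t.+1 - P = 0 by lia.
  rewrite (_ : P <= t.+1) ?div0n ?expn0 /=; last lia.
  under eq_bigr do rewrite !mul1n.
  rewrite sum_count muln1 count_uniq_mem ?iota_uniq // mem_iota.
  case: hPB => [?|hB]; first lia.
  by rewrite (_ : 1 <= B < 1 + m) //; lia.
Qed.

Lemma core2 (m n t a k P B : nat) : 3 <= n -> P < n -> 1 <= a < n - 1 ->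
  1 * ((a.+1 + t) %% n == P) * ((P <= t) || (k == B)) * m ^ ((t - P) %/ n)
 = 1 * ((a + t.+1) %% n == P) * ((P <= t.+1) || (k == B)) * m ^ ((t.+1 - P) %/ n).
Proof.
move=> hn hP ha; rewrite addSnnS.
case e: ((a + t.+1) %% n == P) => /=; last by rewrite !mul0n.
have ne : (t.+1 %% n == P) = false.
  apply/negbTE/eqP => e2.
  have : (a + t.+1 == 0 + t.+1 %[mod n]) by rewrite add0n e2 (eqP e).
  rewrite eqn_modDr mod0n modn_small; lia.
case: (leqP P t) => hPt.
- have -> : P <= t.+1 by lia.
  by rewrite divS_cases // ?ne //; lia.
- have hPt1 : t.+1 < P.
    case: (ltngtP t.+1 P) => // h; first lia.
    by move: ne; rewrite h modn_small // eqxx.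
  have -> : t - P = 0 by lia.
  have -> : t.+1 - P = 0 by lia.
  by rewrite (leqNgt P t.+1) hPt1.
Qed.

Lemma core3 (m n t k P B : nat) : 3 <= n -> P < n -> (P == 0) = (B == 0) -> 1 <= k ->
  1 * ((0 + t) %% n == P) * ((P <= t) || (0 == B)) * m ^ ((t - P) %/ n)
 = 1 * ((n - 1 + t.+1) %% n == P) * ((P <= t.+1) || (k == B)) * m ^ ((t.+1 - P) %/ n).
Proof.
move=> hn hP hPB hk.
have -> : n - 1 + t.+1 = n + t by lia.
rewrite modnDl add0n.
case e: (t %% n == P) => /=; last by rewrite !mul0n.
have hPt : P <= t by rewrite -(eqP e) leq_mod.
have -> : P <= t.+1 by lia.
rewrite hPt /= divS_cases //; last lia.
have -> : (t.+1 %% n == P) = false.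
  apply/negbTE/eqP => e2.
  have : (1 + t == 0 + t %[mod n]) by rewrite add0n add1n e2 (eqP e).
  rewrite eqn_modDr mod0n modn_small; lia.
by [].
Qed.

Lemma vertex1 m n : 1 <= m -> dw_vertex m n 1.
Proof. move=> hm; rewrite /dw_vertex /dw_nv; apply/andP; split; nia. Qed.

Lemma jinfo m n j : 3 <= n -> dw_vertex m n j ->
  [/\ dpos n j < n, (dpos n j == 0) = (dblade n j == 0) & (dpos n j = 0 \/ 1 <= dblade n j <= m)].
Proof.
move=> hn hj; have [->|[k [a [hk ha ->]]]] := vertex_cases hn hj.
  by rewrite dpos1 dblade1; split => //; [lia | left].
have hk1 : 1 <= k by case/andP: hk.
rewrite dpos_code // dblade_code //; split; try lia.

Qed.

Lemma step m n t i j : 1 <= m -> 3 <= n -> dw_vertex m n j ->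
  (forall v, dw_nwalks m n t v j = Fw m n t v j) ->
  dw_nwalks m n t.+1 i j = Fw m n t.+1 i j.
Proof.
move=> hm hn hj IH; rewrite nwalks_rec //.
under eq_bigr do rewrite IH.
have [hP hPB hPB'] := jinfo hn hj.
set N := (dw_nv m n).+1.
case: (boolP (dw_vertex m n i)) => hi; last first.
  rewrite /Fw (negbTE hi) /= !mul0n big1 // => v _.
  case E: (dw_edge m n i v) => //=; have := edge_valid hn E; by rewrite (negbTE hi).
have [->|[k [a [hk ha ->]]]] := vertex_cases hn hi.
- under eq_bigr do rewrite edge_center //.
  rewrite (sum_mem (fun v => Fw m n t v j)); first last.
  + apply/allP => x /mapP [k]; rewrite mem_iota => hk ->.
    have := @code_vertex m n k 1 hn (_ : 1 <= k <= m) (_ : 1 <= 1 <= n - 1).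
    rewrite /dw_vertex /N => /(_ ltac:(lia)) /(_ ltac:(lia)) /andP[_ h]; lia.
  + rewrite map_inj_in_uniq ?iota_uniq // => x y; rewrite !mem_iota => hx hy e.
    by have [] := @code_inj n x 1 y 1 hn ltac:(lia) ltac:(lia) ltac:(lia) ltac:(lia) e.
  rewrite big_map.
  rewrite (eq_big_seq (fun k => 1 * ((1 + t) %% n == dpos n j) *
     ((dpos n j <= t) || (k == dblade n j)) * m ^ ((t - dpos n j) %/ n))); last first.
    move=> k; rewrite mem_iota => hk.
    rewrite /Fw code_vertex ?dpos_code ?dblade_code //; lia.
  rewrite (@core1 m n t (dpos n j) (dblade n j) hn hP hPB').
  by rewrite /Fw vertex1 // dpos1 dblade1.
- have hk1 : 1 <= k by case/andP: hk.
  case: (a =P n - 1) => ea.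
  + subst a. under eq_bigr do rewrite (edge_code _ hn hk ha) eqxx.
    rewrite (sum_pred1 N (fun v => Fw m n t v j)) (_ : 1 < N) ?mul1n; last first.
      rewrite /N /dw_nv; nia.
    rewrite /Fw vertex1 // dpos1 dblade1 code_vertex // dpos_code // dblade_code //.
    exact: core3.
  + have ea' : (a == n - 1) = false by apply/eqP.
    under eq_bigr do rewrite (edge_code _ hn hk ha) ea'.
    have ha1 : 1 <= a.+1 <= n - 1 by lia.
    rewrite (sum_pred1 N (fun v => Fw m n t v j)).
    have := code_vertex hn hk ha1; rewrite {1}/dw_vertex => /andP[_ hc].
    rewrite (_ : code n k a.+1 < N) ?mul1n; last by rewrite /N; lia.
    rewrite /Fw !code_vertex // !dpos_code // !dblade_code //.
    apply: core2 => //; lia.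
Qed.

Lemma dw_closed m n t i j : 1 <= m -> 3 <= n -> dw_vertex m n j ->
  dw_nwalks m n t i j = Fw m n t i j.
Proof.
move=> hm hn hj; elim: t i => [|t IH] i; first by rewrite nwalks0 Fw0.
exact: step.
Qed.

Theorem proposition2p8 (m n p : nat) :
  1 <= m -> 3 <= n -> 2 <= p ->
  forall i j : nat, dw_vertex m n i -> dw_vertex m n j ->
  dw_nwalks m n (p * n - 1) i j = m ^ (p - 1) * dw_nwalks m n (n - 1) i j.
Proof.
move=> hm hn hp i j hi hj.
rewrite !dw_closed // /Fw.
have [hP _ _] := jinfo hn hj.
have e1 : dpos n i + (p * n - 1) = (p - 1) * n + (dpos n i + (n - 1)) by nia.
rewrite e1 modnMDl.
have -> : dpos n j <= p * n - 1 by nia.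
have -> : dpos n j <= n - 1 by lia.
have -> : p * n - 1 - dpos n j = (p - 1) * n + (n - 1 - dpos n j) by nia.
rewrite divnMDl; last lia.
rewrite divn_small; last lia.
rewrite addn0 expn0 muln1 mulnC.
by [].
Qed.
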